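(* In the ascending-price auction $G^*$ (defined in the context), for every bidder $i$, every information set $\boldsymbol h_i$ of $i$ containing at least two histories, and every partition $\{\boldsymbol h_i^1,\boldsymbol h_i^2\}$ of $\boldsymbol h_i$ into two nonempty sets, the illuminating (ILL) with respect to $\boldsymbol h_i,\boldsymbol h_i^1,\boldsymbol h_i^2$ is not incentive-preserving (with respect to the second-price auction rule $f$).
   Context: General framework. Agents $N$ with finite type spaces $\Theta_i$, types inducing complete transitive preferences $R(\theta_i)$ over outcomes; an SCF $f$ maps type profiles to outcomes. A gradual mechanism (GM) implementing $f$ is a finite extensive game form with perfect recall (possibly simultaneous moves, all agents active at the initial history, information sets partitioning each agent's decision nodes, outcome function on terminal histories) in which each action of agent $i$ is a nonempty subset of $\Theta_i$, at each decision node of $i$ the available actions are pairwise disjoint with union equal to the last action $\Theta_i(h)$ of $i$ taken before (or $\Theta_i$ if none), and each terminal history $z$ receives outcome $f(\theta)$ for any $\theta\in\Theta(z)=\prod_k\Theta_k(z)$. For a set $\boldsymbol h$ of histories contained in an information set of $i$: $\Theta_i(\boldsymbol h)$ is $i$'s current report there and $\Theta_{-i}(\boldsymbol h)=\bigcup_{h\in\boldsymbol h}\prod_{k\ne i}\Theta_k(h)$. A history $h$ is consistent with a strategy profile $s_M$ of agents in $M\subsetneq N$ if it lies on the path of some completion of $s_M$; a type profile $\theta$ is consistent with $s_M$ if the terminal history $z$ with $\theta\in\Theta(z)$ is. ILL. Given an information set $\boldsymbol h_i$ and a partition into nonempty $\boldsymbol h_i^1,\boldsymbol h_i^2$, the ILL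 splits $\boldsymbol h_i$ into these two information sets (and splits $i$'s later information sets accordingly), leaving everything else unchanged. It is incentive-preserving if for every agent $j\ne i$, all $\theta_i^1,\theta_i^2\in\Theta_i(\boldsymbol h_i)$, $\theta_j^1,\theta_j^2\in\Theta_j$, $\theta_{-i,j}^1,\theta_{-i,j}^2$ (type profiles of agents other than $i,j$) such that (i) $(\theta_j^1,\theta_{-i,j}^1)\in\Theta_{-i}(\boldsymbol h_i^1)$, (ii) $(\theta_j^2,\theta_{-i,j}^2)\in\Theta_{-i}(\boldsymbol h_i^2)$, (iii) some strategy profile $s_{-i,j}$ of agents other than $i,j$ is consistent with both $(\theta_i^1,\theta_j^1,\theta_{-i,j}^1)$ and $(\theta_i^2,\theta_j^2,\theta_{-i,j}^2)$, we have $f(\theta_i^1,\theta_j^1,\theta_{-i,j}^1)\,R(\theta_j^1)\,f(\theta_i^2,\theta_j^2,\theta_{-i,j}^2)$. Auction environment. Bidders $N=\{1,\dots,n\}$ ($n\ge2$), each with private value $v_i\in V=\{1,\dots,m\}$ ($m\ge2$), so $\Theta_i=V$. An outcome is a probability distribution over which bidder receives the item together with the price the winner pays; bidder $i$ with value $v_i$ ranks outcomes by expected payoff (probability of winning times $v_i$ minus the price paid upon winning). The second-price auction rule $f$ assigns to each value profile $v$ the outcome in which the item goes, with equal probability, to one of the bidders with the highest value, who pays the second-highest entry of $v$ (equal to the highest value if there is a tie at the top). Ascending-price auction $G^*$. Price levels $p=1,2,\dots$. At $p=1$ all bidders are active; at $p\ge2$ the active bidders are those who stayed at $p-1$. At price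 $p\le m-1$, active bidders move one at a time in increasing index order; each chooses ''stay'', the action $\{v\in V:v>p\}$, or ''leave'', the action $\{v\in V:v=p\}$. After all active bidders have moved at $p$: if exactly one stayed, she wins and pays $p$; if none stayed, a uniformly random bidder among those who left at $p$ wins and pays $p$; if at least two stayed and $p<m-1$, the price rises to $p+1$; if at least two stayed and $p=m-1$, the auction stops and a uniformly random bidder among those who stayed at $m-1$ wins and pays $m$. Information: when bidder $i$ moves at price $p$, she knows all choices at earlier price levels; regarding the bidders who moved before her at price $p$: if at least two of them stayed she knows exactly their choices, otherwise she knows only that at most one of them stayed. That is, an information set of $i$ is a singleton unless it contains a history in which fewer than two earlier movers at price $p$ stayed, in which case it consists of all histories that coincide with it at all previous price levels and in which fewer than two earlier movers at price $p$ stayed. *)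

(* Defs.v *)
From mathcomp Require Import all_boot all_order all_algebra.

Unset Printing Implicit Defensive.

Import Order.TTheory GRing.Theory Num.Theory.

(* Bidders are 0, ..., n-1 (the paper's 1..n, same order); values are the
   naturals 1..m.  A history is the sequence of stay (true) / leave (false)
   choices in the order in which they are made. *)

Definition inV (m v : nat) : bool := (1 <= v <= m)%N.

(* Game state at a history:
   Dec p A d : decision node at price p, A = active bidders at p (increasing
               order), d = choices already made at price p by the first
               (size d) bidders of A (the next mover is the (size d)-th one);
   Term      : terminal history. *)
Inductive node := Dec of nat & seq nat & seq bool | Term.

Definition step (m : nat) (x : option node) (b : bool) : option node :=
  match x with
  | Some (Dec p A d) =>
      let d' := rcons d b in
      if (size d' < size A)%N then Some (Dec p A d')
      else let S := mask d' A in
           if (1 < size S)%N && (p.+1 < m)%N then Some (Dec p.+1 S [::])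
           else Some Term
  | _ => None
  end.

(* [None] means that h is not a history of G*. *)
Definition exec (n m : nat) (h : seq bool) : option node :=
  foldl (step m) (Some (Dec 1 (iota 0 n) [::])) h.

Definition is_terminal n m h : bool :=
  if exec n m h is Some Term then true else false.

Definition mover n m h : option nat :=
  if exec n m h is Some (Dec _ A d) then Some (nth 0 A (size d)) else None.

Definition price_at n m h : nat :=
  if exec n m h is Some (Dec p _ _) then p else 0.

(* Theta_k(h): the last action of bidder k taken before h, or V if none.
   Stay at price q is the action {v in V | v > q}; leave is {v in V | v = q}. *)
Definition theta_set n m (h : seq bool) (k : nat) : pred nat :=
  let ts := [seq t <- iota 0 (size h) | mover n m (take t h) == Some k] in
  match ts with
  | [::] => fun v => inV m v
  | t0 :: _ =>
      let t := last t0 ts in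
      let q := price_at n m (take t h) in
      if nth false h t then fun v => (q < v <= m)%N else fun v => v == q
  end.

(* h and h' lie in the same information set of G*: both are decision nodes,
   they coincide at all previous price levels, the same bidder moves, and
   either h = h' or at both fewer than two earlier movers at the current
   price stayed. *)
Definition same_info n m (h h' : seq bool) : bool :=
  match exec n m h, exec n m h' with
  | Some (Dec _ _ d), Some (Dec _ _ d') =>
      [&& take (size h - size d) h == take (size h' - size d') h',
          size d == size d' &
          (h == h') || ((count id d < 2)%N && (count id d' < 2)%N)]
  | _, _ => false
  end.

Definition info_set n m (h0 : seq bool) : pred (seq bool) :=
  fun h => same_info n m h0 h.

(* Strategies: s k h is bidder k's choice (stay = true) at decision node h.
   Both actions are available at every decision node of G*. *)
Definition strategy := nat -> seq bool -> bool.

Definition measurable_on n m (P : pred nat) (s : strategy) : Prop :=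
  forall k h h', P k -> mover n m h = Some k -> same_info n m h h' ->
    s k h = s k h'.

Definition on_path n m (s : strategy) (h : seq bool) : Prop :=
  forall t, (t < size h)%N ->
    exists k, mover n m (take t h) = Some k /\ nth false h t = s k (take t h).

Definition hist_consistent n m (P : pred nat) (s : strategy) h : Prop :=
  exists s' : strategy,
    measurable_on n m predT s' /\
    (forall k h', P k -> mover n m h' = Some k -> s' k h' = s k h') /\
    on_path n m s' h.

Definition prof_consistent n m (P : pred nat) (s : strategy)
  (theta : 'I_n -> nat) : Prop :=
  exists z, is_terminal n m z /\
    (forall k : 'I_n, theta_set n m z k (theta k)) /\
    hist_consistent n m P s z.

Definition in_theta_minus n m (H : pred (seq bool)) (i : 'I_n)
  (theta : 'I_n -> nat) : Prop :=
  exists h, H h /\ forall k : 'I_n, k != i -> theta_set n m h k (theta k).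

Record outcome (n : nat) := Outcome { win_prob : 'I_n -> rat; pay : nat }.

Definition maxv n (theta : 'I_n -> nat) : nat := \max_(k < n) theta k.

Definition second_highest n (theta : 'I_n -> nat) : nat :=
  nth 0 (sort (fun a b => (b <= a)%N) [seq theta k | k <- enum 'I_n]) 1.

Definition spa n (theta : 'I_n -> nat) : outcome n :=
  Outcome n (fun k => if theta k == maxv n theta
                    then ((#|[pred l | theta l == maxv n theta]|%:R)^-1)%R
                    else 0%R)
          (second_highest n theta).

Definition exp_payoff n (j : 'I_n) (v : nat) (o : outcome n) : rat :=
  (win_prob n o j * (v%:R - (pay n o)%:R))%R.

Definition weakly_prefers n (j : 'I_n) (v : nat) (o1 o2 : outcome n) : Prop :=
  (exp_payoff n j v o2 <= exp_payoff n j v o1)%R.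

Definition others (i j : nat) : pred nat := fun k => (k != i) && (k != j).

Definition ill_ip_cond n m (i : 'I_n) (h0 : seq bool)
  (H1 H2 : pred (seq bool)) : Prop :=
  forall j : 'I_n, j != i ->
  forall theta1 theta2 : 'I_n -> nat,
    theta_set n m h0 i (theta1 i) -> theta_set n m h0 i (theta2 i) ->
    inV m (theta1 j) -> inV m (theta2 j) ->
    in_theta_minus n m H1 i theta1 -> in_theta_minus n m H2 i theta2 ->
    (exists s : strategy, measurable_on n m (others i j) s /\
       prof_consistent n m (others i j) s theta1 /\
       prof_consistent n m (others i j) s theta2) ->
    weakly_prefers n j (theta1 j) (spa n theta1) (spa n theta2).

(* The ILL w.r.t. the unordered partition {H1, H2} is incentive-preserving:
   the condition holds whichever part is labelled 1. *)
Definition ill_incentive_preserving n m (i : 'I_n) (h0 : seq bool)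
  (H1 H2 : pred (seq bool)) : Prop :=
  ill_ip_cond n m i h0 H1 H2 /\ ill_ip_cond n m i h0 H2 H1.

(* Main.v *)
Require Import Defs.
From mathcomp Require Import all_boot all_order all_algebra.
From mathcomp Require Import zify.
Import Order.TTheory GRing.Theory Num.Theory.
Set Implicit Arguments. Unset Strict Implicit.


Lemma exec_rcons n m h b : exec n m (rcons h b) = step m (exec n m h) b.
Proof. by rewrite /exec -cats1 foldl_cat. Qed.

Lemma foldl_none m s : foldl (step m) None s = None.
Proof. by elim: s. Qed.

Lemma exec_cat n m h e : exec n m (h ++ e) = foldl (step m) (exec n m h) e.
Proof. by rewrite /exec foldl_cat. Qed.

Lemma theta_set_rcons n m h b k v :
  theta_set n m (rcons h b) k v =
  if mover n m h == Some k then (if b then (price_at n m h < v <= m) else v == price_at n m h)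
  else theta_set n m h k v.
Proof.
rewrite /theta_set size_rcons -addn1 iotaD add0n /= filter_cat /=.
have -> : [seq t <- iota 0 (size h) | mover n m (take t (rcons h b)) == Some k]
        = [seq t <- iota 0 (size h) | mover n m (take t h) == Some k].
  apply: eq_in_filter => t; rewrite mem_iota => /andP[_ lt].
  by rewrite -cats1 takel_cat // ltnW.
rewrite -cats1 take_size_cat //.
set ts := filter _ _.
have hts : forall t, t \in ts -> t < size h.
  by move=> t; rewrite mem_filter mem_iota => /andP[_ /andP[_]].
case: ifP => hm.
- have hb : nth false (h ++ [:: b]) (size h) = b by rewrite nth_cat ltnn subnn.
  case E: ts hts => [|t0 ts'] hts /=.
    by rewrite hb take_size_cat //; case: b {hb}.
  by rewrite last_cat /= hb take_size_cat //; case: b {hb}.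
- rewrite cats0; case E: ts hts => [|t0 ts'] hts //.
  have : last t0 ts' \in t0 :: ts' := mem_last _ _.
  move/hts => lt.
  by rewrite nth_cat lt takel_cat // ltnW.
Qed.


Lemma exec_within n m P p A e : exec n m P = Some (Dec p A [::]) ->
  size e < size A -> exec n m (P ++ e) = Some (Dec p A e).
Proof.
move=> hP; elim/last_ind: e => [|e b IH]; first by rewrite cats0.
rewrite size_rcons => hs; rewrite -rcons_cat exec_rcons IH; last by lia.
by rewrite /= size_rcons hs.
Qed.

Lemma mover_within n m P p A e : exec n m P = Some (Dec p A [::]) ->
  size e < size A -> mover n m (P ++ e) = Some (nth 0 A (size e)).
Proof. by move=> hP hs; rewrite /mover (exec_within hP hs). Qed.

Lemma price_within n m P p A e : exec n m P = Some (Dec p A [::]) ->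
  size e < size A -> price_at n m (P ++ e) = p.
Proof. by move=> hP hs; rewrite /price_at (exec_within hP hs). Qed.

Lemma partial_theta n m P p A e k v : exec n m P = Some (Dec p A [::]) ->
  uniq A -> size e <= size A ->
  theta_set n m (P ++ e) k v =
  if index k A < size e then (if nth false e (index k A) then p < v <= m else v == p)
  else theta_set n m P k v.
Proof.
move=> hP uA; elim/last_ind: e => [|e b IH]; first by rewrite cats0.
rewrite size_rcons => hs; rewrite -rcons_cat theta_set_rcons.
rewrite (mover_within hP) ?(price_within hP); try lia.
case: eqP => [[hk]|hk].
  rewrite -hk index_uniq //.
  by rewrite ltnSn nth_rcons ltnn eqxx.
rewrite IH; last lia.
have hi : index k A != size e.
  apply/eqP => hi; apply: hk; congr Some.
  have: index k A < size A by lia.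
  by rewrite index_mem => kA; rewrite -hi nth_index.
rewrite ltnS (leq_eqVlt (index k A)) (negbTE hi) /= nth_rcons.
by case: ifP.
Qed.

Lemma full_exec n m P p A w : exec n m P = Some (Dec p A [::]) ->
  size w = size A -> 0 < size A ->
  exec n m (P ++ w) = if (1 < size (mask w A)) && (p.+1 < m)
                      then Some (Dec p.+1 (mask w A) [::]) else Some Term.
Proof.
move=> hP; case/lastP: w => [|e b]; first by move=> <-.
rewrite size_rcons => hs _.
rewrite -rcons_cat exec_rcons (exec_within hP); last lia.
by rewrite /= size_rcons hs ltnn.
Qed.

Record SInv n m P p A : Prop := MkSInv {
  si_exec : exec n m P = Some (Dec p A [::]);
  si_uniq : uniq A;
  si_all : all (fun k => k < n) A;
  si_size : 1 < size A;
  si_p : 0 < p < m;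
  si_act : forall k v, k \in A -> p <= v <= m -> theta_set n m P k v;
  si_inact : forall k v, k < n -> k \notin A -> theta_set n m P k v -> v < p }.

Lemma reach n m h p A d : 2 <= n -> 2 <= m -> exec n m h = Some (Dec p A d) ->
  exists P, h = P ++ d /\ SInv n m P p A /\ size d < size A.
Proof.
move=> hn hm; elim/last_ind: h p A d => [|h b IH] p A d.
  rewrite /exec /= => -[<- <- <-]; exists [::]; split=> //; split; last by rewrite size_iota /=; lia.
  split => //; first exact: iota_uniq.
  - by apply/allP => k; rewrite mem_iota.
  - by rewrite size_iota.
  - by move=> k v kn; rewrite mem_iota /=; lia.
rewrite exec_rcons; case E: (exec n m h) => [[p0 A0 d0|]|] //=.
have [P0 [hP0 [[eP0 uA0 aA0 sA0 hp0 th1 th2] sd0]]] := IH _ _ _ E.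
case: ifP => hs.
  by case=> <- <- <-; exists P0; rewrite hP0 rcons_cat; split=> //; split.
case: ifP => hc // [<- <- <-].
have sw : size (rcons d0 b) = size A0 by move: hs; rewrite size_rcons; lia.
have eh : rcons h b = P0 ++ rcons d0 b by rewrite hP0 rcons_cat.
exists (rcons h b); rewrite cats0; split=> //; split; last by move: hc => /andP[]; rewrite /=; lia.
split.
- by rewrite exec_rcons E /= hs hc.
- exact: mask_uniq.
- exact: all_mask.
- by case/andP: hc.
- by case/andP: hc => _; lia.
- move=> k v; rewrite in_mask // => /andP[kA nk] hv.
  rewrite eh (partial_theta _ _ eP0 uA0) ?sw // index_mem kA nk; lia.
- move=> k v kn; rewrite in_mask // eh (partial_theta _ _ eP0 uA0) ?sw //.
  case kA: (k \in A0) => /=.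
    by rewrite index_mem kA => /negbTE -> /eqP ->.
  rewrite index_mem kA => _ /th2; rewrite kA => /(_ kn isT); lia.
Qed.


Lemma ts_nonempty n m h k : 2 <= n -> 2 <= m ->
  exists v, v <= m /\ theta_set n m h k v.
Proof.
move=> hn hm; elim/last_ind: h => [|h b IH].
  by exists m; split=> //; rewrite /theta_set /= /inV; lia.
have [v [vm hv]] := IH.
case E: (exec n m h) => [[p A d|]|].
- have [P [_ [[_ _ _ _ hp _ _] _]]] := reach hn hm E.
  case: (nth 0 A (size d) =P k) => hk.
    case: b; [exists m | exists p]; rewrite theta_set_rcons /mover /price_at E hk eqxx;
      split=> //; lia.
  exists v; split=> //; rewrite theta_set_rcons /mover E.
  by case: eqP => // -[].
- exists v; split=> //; rewrite theta_set_rcons /mover E //.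
- exists v; split=> //; rewrite theta_set_rcons /mover E //.
Qed.

Definition wit n m h k := head 0 [seq v <- iota 0 m.+1 | theta_set n m h k v].

Lemma wit_spec n m h k : 2 <= n -> 2 <= m -> theta_set n m h k (wit n m h k).
Proof.
move=> hn hm; have [v [vm hv]] := ts_nonempty h k hn hm.
have : v \in [seq v <- iota 0 m.+1 | theta_set n m h k v].
  by rewrite mem_filter hv mem_iota; lia.
rewrite /wit; case E: [seq v <- iota 0 m.+1 | theta_set n m h k v] => [|x s] //= _.
have : x \in [seq v <- iota 0 m.+1 | theta_set n m h k v] by rewrite E mem_head.
by rewrite mem_filter => /andP[].
Qed.

Lemma prefix_dec n m z x t : exec n m z = Some x -> t < size z ->
  exists p A d, exec n m (take t z) = Some (Dec p A d).
Proof.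
rewrite -{1}(cat_take_drop t z) exec_cat => hz ht.
have : size (drop t z) > 0 by rewrite size_drop; lia.
case: (drop t z) hz => [|c r] //= hz _.
case E: (exec n m (take t z)) hz => [[p A d|]|] /=; first by eauto.
  by rewrite foldl_none.
by rewrite foldl_none.
Qed.

Lemma sinfo_size n m h h' : 2 <= n -> 2 <= m -> same_info n m h h' -> size h = size h'.
Proof.
move=> hn hm; rewrite /same_info.
case E: (exec n m h) => [[p A d|]|] //; case E': (exec n m h') => [[p' A' d'|]|] //.
case/and3P => /eqP ht /eqP sd _.
have [P [hP _]] := reach hn hm E; have [P' [hP' _]] := reach hn hm E'.
move: ht; rewrite hP hP' !size_cat addnK addnK !take_size_cat // => ->.
by rewrite sd.
Qed.

Lemma si_refl n m h p A d : exec n m h = Some (Dec p A d) -> same_info n m h h.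
Proof. by rewrite /same_info => ->; rewrite !eqxx. Qed.

Lemma si_trans n m h h' X : same_info n m h h' -> same_info n m h X = same_info n m h' X.
Proof.
rewrite /same_info.
case E: (exec n m h) => [[p A d|]|] //; case E': (exec n m h') => [[p' A' d'|]|] //.
case/and3P => /eqP ht /eqP sd.
case: (h =P h') => [eh _|neh /= /andP[c1 c2]].
  by subst h'; move: E'; rewrite E => -[_ _ <-].
case EX: (exec n m X) => [[pX AX dX|]|] //.
rewrite ht sd.
have key : forall g dg, exec n m g = Some (Dec p A d) \/ exec n m g = Some (Dec p' A' d') ->
    count id dg < 2 -> (g == X) || (count id dg < 2) && (count id dX < 2) = (count id dX < 2) -> True.
  by [].
case: (h =P X) => [ehX|_]; case: (h' =P X) => [eh'X|_] /=.
- by rewrite ehX eh'X in neh.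
- move: EX; rewrite -ehX E => -[_ _ <-]; by rewrite c1 c2.
- move: EX; rewrite -eh'X E' => -[_ _ <-]; by rewrite c1 c2.
- by rewrite c1 c2.
Qed.


Definition F n m (z h : seq bool) : option bool :=
  if (size h < size z) && same_info n m h (take (size h) z)
  then Some (nth false z (size h)) else None.

Lemma F_inv n m z h h' : 2 <= n -> 2 <= m -> same_info n m h h' -> F n m z h = F n m z h'.
Proof. by move=> hn hm H; rewrite /F (sinfo_size hn hm H) (si_trans _ H). Qed.

Lemma F_on n m z t p A d : t < size z -> exec n m (take t z) = Some (Dec p A d) ->
  F n m z (take t z) = Some (nth false z t).
Proof.
move=> ht E; rewrite /F size_takel ?(ltnW ht) // ht /=.
by rewrite (si_refl E).
Qed.

Definition strat n m z1 z2 : strategy := fun k h =>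
  match F n m z1 h with Some b => b | None => odflt false (F n m z2 h) end.

Lemma strat_meas n m z1 z2 P : 2 <= n -> 2 <= m -> measurable_on n m P (strat n m z1 z2).
Proof. by move=> hn hm k h h' _ _ H; rewrite /strat (F_inv _ hn hm H) (F_inv _ hn hm H). Qed.

Lemma consistent n m z s (I P : pred nat) : 2 <= n -> 2 <= m ->
  (forall k, P k -> ~~ I k) ->
  (forall k h h', mover n m h = Some k -> same_info n m h h' -> s k h = s k h') ->
  (forall t k, t < size z -> mover n m (take t z) = Some k -> ~~ I k ->
     s k (take t z) = nth false z t) ->
  is_terminal n m z -> hist_consistent n m P s z.
Proof.
move=> hn hm hPI hs hz tz.
have [x ez] : exists x, exec n m z = Some x.
  by move: tz; rewrite /is_terminal; case: (exec n m z) => // x; exists x.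
exists (fun k h => if I k then odflt false (F n m z h) else s k h); split; [|split].
- move=> k h h' _ mk H; case: (I k); last exact: hs mk H.
  by rewrite (F_inv _ hn hm H).
- by move=> k h' /hPI /negbTE -> _.
- move=> t ht; have [p [A [d E]]] := prefix_dec ez ht.
  exists (nth 0 A (size d)); split; first by rewrite /mover E.
  case: ifP => hI; first by rewrite (F_on ht E).
  by rewrite hz // ?hI // /mover E.
Qed.

Lemma strat_z1 n m z1 z2 t k : t < size z1 -> mover n m (take t z1) = Some k ->
  strat n m z1 z2 k (take t z1) = nth false z1 t.
Proof.
move=> ht; rewrite /mover; case E: (exec n m (take t z1)) => [[p A d|]|] // _.
by rewrite /strat (F_on ht E).
Qed.

Lemma strat_z2 n m z1 z2 t k : t < size z2 -> mover n m (take t z2) = Some k ->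
  (t < size z1 -> nth false z1 t = nth false z2 t) ->
  strat n m z1 z2 k (take t z2) = nth false z2 t.
Proof.
move=> ht; rewrite /mover; case E: (exec n m (take t z2)) => [[p A d|]|] // _ agree.
rewrite /strat /F size_takel ?(ltnW ht) //.
case: ifP => [/andP[h1 _]|_]; first exact: agree.
by rewrite ht (si_refl E).
Qed.


Lemma two_count (T : eqType) (s : seq T) (a : pred T) x y :
  uniq s -> x \in s -> y \in s -> x != y -> a x -> a y -> 2 <= count a s.
Proof.
move=> us xs ys xy ax ay; rewrite -size_filter.
have -> : 2 = size [:: x; y] by [].
apply: uniq_leq_size; first by rewrite /= inE xy.
by move=> w; rewrite !inE => /orP[] /eqP ->; rewrite mem_filter ?ax ?ay ?xs ?ys.
Qed.

Lemma sh_ge n (th : 'I_n -> nat) (i j : 'I_n) c : i != j -> c <= th i -> c <= th j ->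
  c <= second_highest n th.
Proof.
move=> ij ci cj; rewrite /second_highest.
set L := [seq th k | k <- enum 'I_n].
have cL : 2 <= count (fun x => c <= x) L.
  rewrite count_map; apply: (@two_count _ _ _ i j) => //; rewrite ?enum_uniq ?mem_enum //.
have : perm_eq (sort (fun a b => b <= a) L) L by rewrite perm_sort.
move/permP => hc.
have srt := sort_sorted (fun a b => leq_total b a) L.
move: cL; rewrite -hc.
case: (sort _ L) srt => [|x0 [|x1 rest]] //=.
  by move=> _; case: (c <= x0).
move=> /andP[h01 hp] cnt.
have tr : transitive (fun a b : nat => b <= a) by move=> a b d hab hbd; exact: leq_trans hbd hab.
have := order_path_min tr hp => /allP hall.
case: (leqP c x1) => // hx1.
have : count (fun x => c <= x) rest = 0.
  apply/eqP; rewrite -leqn0 leqNgt -has_count; apply/hasPn => w /hall /= hw.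
  by rewrite -ltnNge; exact: leq_ltn_trans hw hx1.
move=> h0; move: cnt; rewrite h0 (leqNgt c x1) hx1 /=; lia.
Qed.

Lemma nth_le (s : seq nat) c t : (forall x, x \in s -> x <= c) -> nth 0 s t <= c.
Proof.
move=> h; case: (ltnP t (size s)) => ht; first by apply: h; exact: mem_nth.
by rewrite nth_default.
Qed.

Lemma sh_le n (th : 'I_n -> nat) c : (forall k, th k <= c) -> second_highest n th <= c.
Proof.
move=> h; apply: nth_le => x; rewrite mem_sort => /mapP[k _ ->]; exact: h.
Qed.

Lemma pay_le0 n (th : 'I_n -> nat) (i j : 'I_n) v : i != j -> v <= th i -> v <= th j ->
  (exp_payoff n j v (spa n th) <= 0)%R.
Proof.
move=> ij vi vj; rewrite /exp_payoff /=.
have hs := sh_ge ij vi vj.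
apply: mulr_ge0_le0.
  by case: ifP => // _; rewrite invr_ge0 ler0n.
by rewrite subr_le0 ler_nat.
Qed.

Lemma pay_gt0 n (th : 'I_n -> nat) (j : 'I_n) v : (forall k, th k <= th j) ->
  second_highest n th < v -> (0 < exp_payoff n j v (spa n th))%R.
Proof.
move=> hmax hv; rewrite /exp_payoff /=.
have mx : maxv n th = th j.
  apply/eqP; rewrite eqn_leq; apply/andP; split.
    by apply/bigmax_leqP => k _; exact: hmax.
  exact: (@leq_bigmax _ th j).
rewrite mx eqxx; apply: mulr_gt0.
  rewrite invr_gt0 ltr0n; apply/card_gt0P; exists j; by rewrite inE.
by rewrite subr_gt0 ltr_nat.
Qed.


Lemma count0 (s : seq bool) : count id s = 0 -> s = nseq (size s) false.
Proof. by elim: s => [|[] s IH] //= h; rewrite -IH. Qed.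

Lemma count1 (s : seq bool) : count id s = 1 ->
  index true s < size s /\ forall l, nth false s l = (l == index true s).
Proof.
elim: s => [|[] s IH] //=.
  move=> [] /count0 ->; split=> // -[|l] //=; by rewrite nth_nseq if_same.
move=> /IH [hi hn]; split=> // -[|l] //=.
Qed.

Lemma info_char n m h0 P p A d h : 2 <= n -> 2 <= m ->
  exec n m h0 = Some (Dec p A d) -> h0 = P ++ d -> exec n m P = Some (Dec p A [::]) ->
  same_info n m h0 h ->
  exists d', [/\ h = P ++ d', size d' = size d, exec n m h = Some (Dec p A d') &
                (h0 == h) || (count id d < 2) && (count id d' < 2)].
Proof.
move=> hn hm E0 eh0 eP; rewrite /same_info E0.
case E: (exec n m h) => [[p' A' d'|]|] //.
case/and3P => /eqP ht /eqP sd c.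
have [P' [hP' [[eP' _ _ _ _ _ _] _]]] := reach hn hm E.
move: ht; subst h0 h; rewrite !size_cat !addnK !take_size_cat // => eP'P; subst P'.
move: eP'; rewrite eP => -[<- <-].
by exists d'; split.
Qed.

Unset Implicit Arguments. Set Strict Implicit.


Theorem proposition10 (n m : nat) (hn : (2 <= n)%N) (hm : (2 <= m)%N)
  (i : 'I_n) (h0 : seq bool) :
  mover n m h0 = Some (nat_of_ord i) ->
  (exists h h', h != h' /\ info_set n m h0 h /\ info_set n m h0 h') ->
  forall H1 H2 : pred (seq bool),
    (forall h, info_set n m h0 h = H1 h || H2 h) ->
    (forall h, ~~ (H1 h && H2 h)) ->
    (exists h, H1 h) -> (exists h, H2 h) ->
    ~ ill_incentive_preserving n m i h0 H1 H2.
Proof.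
move=> hmov [h [h' [hh' [inh inh']]]] H1 H2 hpart hdisj [y1 Hy1] [y2 Hy2].
move: hmov; rewrite /mover; case E0: (exec n m h0) => [[p A d|]|] // [hi].
have [P [eh0 [SI sd]]] := reach hn hm E0.
case: SI => eP uA aA sA hp act inact.
have [dh [ehh sdh Eh ch]] := info_char hn hm E0 eh0 eP inh.
have [dh' [ehh' sdh' Eh' ch']] := info_char hn hm E0 eh0 eP inh'.
have cd : (count id d < 2)%N.
  case: (ltnP (count id d) 2) => // cd.
  move: ch ch'; rewrite ltnNge cd /= !orbF => /eqP e1 /eqP e2.
  by move: hh'; rewrite -e1 -e2 eqxx.
have r0 : (0 < size d)%N.
  case: (posnP (size d)) => // s0.
  move: sdh sdh'; rewrite s0 => /size0nil e1 /size0nil e2.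
  by move: hh'; rewrite ehh ehh' e1 e2 eqxx.
set r := size d.
have rA : (r < size A)%N by [].
set z0 := P ++ nseq r false.
have ez0 : exec n m z0 = Some (Dec p A (nseq r false)).
  by apply: exec_within; rewrite ?size_nseq.
have iz0 : info_set n m h0 z0.
  rewrite /info_set /same_info E0 ez0 eh0 /z0 !size_cat size_nseq !addnK.
  rewrite !take_size_cat ?size_nseq // !eqxx /= count_nseq mul0n cd.
  by rewrite orbT.
have core : forall (Ha Hb : pred (seq bool)) y, info_set n m h0 y -> y != z0 ->
    Hb y -> Ha z0 -> ~ ill_ip_cond n m i h0 Hb Ha.
  move=> Ha Hb y iy nyz Hby Haz IP.
  have [dy [ey sdy Ey cy]] := info_char hn hm E0 eh0 eP iy.
  have cdy : count id dy = 1.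
    have c2 : (count id dy < 2)%N.
      case/orP: cy => [/eqP ehy|/andP[_ ->] //].
      by move: Ey; rewrite -ehy E0 => -[<-].
    case: (posnP (count id dy)) => [/count0 e0|pos]; last by apply/eqP; rewrite eqn_leq pos -ltnS c2.
    by move: nyz; rewrite ey e0 sdy eqxx.
  have [k0lt hk0] := count1 cdy.
  set k0 := index true dy in k0lt hk0.
  have k0r : (k0 < r)%N by rewrite /r -sdy.
  have k0A : (k0 < size A)%N by apply: ltn_trans k0r rA.
  have jn : (nth 0 A k0 < n)%N by move/allP: aA; apply; exact: mem_nth.
  pose j : 'I_n := Ordinal jn.
  have ji : j != i.
    apply/eqP => /(congr1 val) /=; rewrite -hi => /eqP.
    by rewrite nth_uniq // => /eqP e; move: k0r; rewrite e ltnn.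
  have iA : (i : nat) \in A by rewrite -hi mem_nth.
  have jA : (j : nat) \in A by rewrite /= mem_nth.
  pose th2 : 'I_n -> nat := fun k => if (k : nat) \in A then p else wit n m P k.
  pose w1 := mkseq (fun l => (l == k0) || (l == r)) (size A).
  have sw1 : size w1 = size A by rewrite size_mkseq.
  have nw1 : forall l, (l < size A)%N -> nth false w1 l = (l == k0) || (l == r).
    by move=> l hl; rewrite nth_mkseq.
  pose A' := mask w1 A.
  have hei : forall k : 'I_n, (k : nat) \in A -> (k == i) = (index (k : nat) A == r).
    move=> k kA; have kl : (index (k : nat) A < size A)%N by rewrite index_mem.
    by rewrite -[k == i]/((k:nat) == (i:nat)) -hi -{1}(nth_index 0 kA) nth_uniq.
  have hej : forall k : 'I_n, (k : nat) \in A -> (k == j) = (index (k : nat) A == k0).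
    move=> k kA; have kl : (index (k : nat) A < size A)%N by rewrite index_mem.
    by rewrite -[k == j]/((k:nat) == nth 0 A k0) -{1}(nth_index 0 kA) nth_uniq.
  have hA' : forall k : 'I_n, ((k : nat) \in A') = (k == i) || (k == j).
    move=> k; rewrite in_mask //; case kA: ((k : nat) \in A) => /=.
      have kl : (index (k : nat) A < size A)%N by rewrite index_mem.
      by rewrite nw1 // (hei k kA) (hej k kA) orbC.
    apply/esym/negbTE; apply/orP => -[] /eqP ek; move: kA; rewrite ek ?iA ?jA //.
  pose th1 : 'I_n -> nat := fun k => if (k : nat) \in A' then p.+1 else th2 k.
  have uA' : uniq A' by apply: mask_uniq.
  have sA' : (1 < size A')%N.
    have : (size [:: (i : nat); (j : nat)] <= size A')%N.
      apply: uniq_leq_size.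
        by rewrite /= inE andbT; rewrite eq_sym in ji; exact: ji.
      by move=> x; rewrite !inE => /orP[] /eqP ->; rewrite hA' eqxx ?orbT.
    by [].
  have A0 : (0 < size A)%N by apply: ltnW.
  pose z2 := P ++ nseq (size A) false.
  have tz2 : is_terminal n m z2.
    by rewrite /is_terminal /z2 (full_exec eP) ?size_nseq // mask_false.
  have thz2 : forall k : 'I_n, theta_set n m z2 k (th2 k).
    move=> k; rewrite /z2 (partial_theta _ _ eP uA) ?size_nseq // index_mem /th2.
    case kA: ((k : nat) \in A); first by rewrite nth_nseq if_same.
    exact: wit_spec.
  pose c1 := if (p.+1 < m)%N then w1 ++ nseq (size A') false else w1.
  pose z1 := P ++ c1.
  have ew1 := full_exec eP sw1 A0.
  have pm : (p < m)%N by case/andP: hp.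
  have [tz1 thz1] : is_terminal n m z1 /\ forall k : 'I_n, theta_set n m z1 k (th1 k).
    rewrite /z1 /c1; case: ifP => hpm.
    - rewrite sA' hpm /= in ew1.
      rewrite catA; split.
        by rewrite /is_terminal (full_exec ew1) ?size_nseq ?(ltnW sA') // mask_false.
      move=> k; rewrite (partial_theta _ _ ew1 uA') ?size_nseq // index_mem /th1.
      case kA': ((k : nat) \in A'); first by rewrite nth_nseq if_same.
      rewrite (partial_theta _ _ eP uA) ?sw1 // index_mem /th2.
      case kA: ((k : nat) \in A).
        have : ~~ nth false w1 (index (k:nat) A) by move: kA'; rewrite in_mask // kA /= => ->.
        by move/negbTE ->.
      exact: wit_spec.
    - rewrite sA' hpm /= in ew1; split; first by rewrite /is_terminal ew1.
      move=> k; rewrite (partial_theta _ _ eP uA) ?sw1 // index_mem /th1 /th2.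
      have := in_mask (k : nat) w1 uA.
      case kA: ((k : nat) \in A) => /= eA'.
        rewrite -eA'; case: ((k : nat) \in A') => //=.
        by rewrite ltnSn.
      rewrite eA'; exact: wit_spec.
  have t1i : th1 i = p.+1 by rewrite /th1 hA' eqxx.
  have t1j : th1 j = p.+1 by rewrite /th1 hA' eqxx orbT.
  have t2j : th2 j = p by rewrite /th2 jA.
  have t2i : th2 i = p by rewrite /th2 iA.
  have ii : index (i : nat) A = r by rewrite -hi index_uniq.
  have p1 : (0 < p)%N by case/andP: hp.
  have pp1 : (p <= p.+1 <= m)%N by rewrite leqnSn pm.
  have ppm : (p <= p <= m)%N by rewrite leqnn ltnW.
  have agree : forall t k, (t < size z2)%N -> mover n m (take t z2) = Some k ->
      ~~ ((k == (i : nat)) || (k == (j : nat))) -> (t < size z1)%N ->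
      nth false z1 t = nth false z2 t.
    move=> t k ht hmk hI _.
    case: (ltnP t (size P)) => tP; first by rewrite /z1 /z2 !nth_cat tP.
    have lA : (t - size P < size A)%N.
      by move: ht; rewrite /z2 size_cat size_nseq => ht; rewrite ltn_subLR.
    have ez : take t z2 = P ++ nseq (t - size P) false.
      by rewrite /z2 take_cat ltnNge tP /= take_nseq // ltnW.
    move: hmk; rewrite ez (mover_within eP) ?size_nseq // => -[ek].
    rewrite /z1 !nth_cat ltnNge tP /= nth_nseq lA.
    have -> : nth false c1 (t - size P) = nth false w1 (t - size P).
      by rewrite /c1; case: ifP => _ //; rewrite nth_cat sw1 lA.
    rewrite nw1 //; apply/negbTE; apply: contra hI => /orP[] /eqP e; rewrite -ek e.
      by rewrite eqxx orbT.
    by rewrite /r hi eqxx.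
  have WP := IP j ji th1 th2.
  have c1h : theta_set n m h0 i (th1 i).
    rewrite t1i eh0 (partial_theta _ _ eP uA (ltnW rA)) ii ltnn.
    by apply: act.
  have c2h : theta_set n m h0 i (th2 i).
    rewrite t2i eh0 (partial_theta _ _ eP uA (ltnW rA)) ii (ltnn (size d)).
    by apply: act.
  have c3h : inV m (th1 j) by rewrite t1j /inV.
  have c4h : inV m (th2 j) by rewrite t2j /inV p1 ltnW.
  have c5h : in_theta_minus n m Hb i th1.
    exists y; split => // k ki.
    rewrite ey (partial_theta _ _ eP uA) ?sdy ?(ltnW rA) //.
    case kA: ((k : nat) \in A).
      case: ifP => _.
        rewrite hk0 /th1 hA' (negbTE ki) /= (hej k kA).
        by case: (index (k : nat) A == k0) => /=; [rewrite ltnSn | rewrite /th2 kA].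
      by rewrite /th1 /th2 kA; case: ifP => _; apply: act.
    rewrite memNindex ?kA // ltnNge (ltnW rA) /=.
    have kA' : ((k : nat) \in A') = false by rewrite in_mask // kA.
    rewrite /th1 kA' /th2 kA; exact: wit_spec.
  have c6h : in_theta_minus n m Ha i th2.
    exists z0; split => // k _.
    rewrite /z0 (partial_theta _ _ eP uA) ?size_nseq ?(ltnW rA) //.
    case kA: ((k : nat) \in A).
      by case: ifP => _; rewrite /th2 kA ?nth_nseq ?if_same //; apply: act.
    rewrite memNindex ?kA // ltnNge (ltnW rA) /= /th2 kA; exact: wit_spec.
  pose I := [pred k : nat | (k == (i : nat)) || (k == (j : nat))].
  have oI : forall k, others i j k -> ~~ I k.
    by move=> k /andP[a b]; rewrite /I inE negb_or a b.
  have ms : forall k h h', mover n m h = Some k -> same_info n m h h' ->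
      strat n m z1 z2 k h = strat n m z1 z2 k h'.
    move=> k g g' mk hs.
    by apply: (@strat_meas n m z1 z2 predT hn hm k g g' isT mk hs).
  have c7h : exists s : strategy, measurable_on n m (others i j) s /\
       prof_consistent n m (others i j) s th1 /\
       prof_consistent n m (others i j) s th2.
    exists (strat n m z1 z2); split; first by move=> k g g' _; exact: ms.
    split.
      exists z1; split => //; split => //.
      apply: (consistent (I := I)) => //.
      by move=> t k ht hmk _; exact: strat_z1.
    exists z2; split => //; split => //.
    apply: (consistent (I := I)) => //.
    move=> t k ht hmk hI; apply: strat_z2 => //.
    exact: agree hmk hI.
  have WP2 := WP c1h c2h c3h c4h c5h c6h c7h.
  move: WP2; rewrite /weakly_prefers t1j.
  have neg : (exp_payoff n j p.+1 (spa n th1) <= 0)%R.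
    apply: (@pay_le0 n th1 i j); first by rewrite eq_sym.
      by rewrite t1i.
    by rewrite t1j.
  have pos : (0 < exp_payoff n j p.+1 (spa n th2))%R.
    apply: pay_gt0.
      move=> k; rewrite t2j /th2; case kA: ((k : nat) \in A) => //.
      apply: ltnW; apply: (inact _ _ (ltn_ord k)); rewrite ?kA //.
      exact: wit_spec.
    rewrite ltnS; apply: sh_le => k; rewrite /th2; case kA: ((k : nat) \in A) => //.
    apply: ltnW; apply: (inact _ _ (ltn_ord k)); rewrite ?kA //.
    exact: wit_spec.
  move=> le21; have := lt_le_trans pos (le_trans le21 neg).
  by rewrite ltxx.
have := iz0; rewrite hpart => /orP[hz|hz].
- have iy2 : info_set n m h0 y2 by rewrite hpart Hy2 orbT.
  have ny2 : y2 != z0.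
    by apply/eqP => e; move: (hdisj z0); rewrite hz -e Hy2.
  by move=> [_ IP]; exact: (core H1 H2 y2 iy2 ny2 Hy2 hz IP).
- have iy1 : info_set n m h0 y1 by rewrite hpart Hy1.
  have ny1 : y1 != z0.
    by apply/eqP => e; move: (hdisj z0); rewrite hz -e Hy1.
  by move=> [IP _]; exact: (core H2 H1 y1 iy1 ny1 Hy1 hz IP).
Qed.
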